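(* Let $\mathbb{K}$ be a topological field, $d\in\mathbb{N}$, $F$ a topological $\mathbb{K}$-vector space, $U\subseteq\mathbb{K}^d$ open or of the form $U_1\times\cdots\times U_d$ with $U_i\subseteq\mathbb{K}$ having dense interior, $f\colon U\to F$, and $k\in\mathbb{N}_0$. Let $e_1,\ldots,e_d$ denote the standard unit multi-indices. (a) If $f$ is $C^1_{SDS}$ and $f^{<e_i>}$ is $C^k_{SDS}$ for each $i\in\{1,\ldots,d\}$, then $f$ is $C^{k+1}_{SDS}$. (b) Let $\mathbb{K}$ be a valued field and $\sigma>0$. If $f$ is $C^{1,\sigma}_{SDS}$ and $f^{<e_i>}$ is $C^{k,\sigma}_{SDS}$ for each $i\in\{1,\ldots,d\}$, then $f$ is $C^{k+1,\sigma}_{SDS}$.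
   Context: Topological fields are Hausdorff and non-discrete, vector spaces Hausdorff; a valued field is a field with absolute value defining a non-discrete topology. For $\alpha\in\mathbb{N}_0^d$, $|\alpha|=\sum\alpha_i$; write $x\in\mathbb{K}^{d+|\alpha|}$ as $(x^{(1)},\ldots,x^{(d)})$, $x^{(i)}=(x^{(i)}_0,\ldots,x^{(i)}_{\alpha_i})$. $U^{<\alpha>}$: all $x$ with $(x^{(1)}_{i_1},\ldots,x^{(d)}_{i_d})\in U$ for all $0\le i_\ell\le\alpha_\ell$; $U^{>\alpha<}$: those with $x^{(i)}_j\neq x^{(i)}_k$ for $j\neq k$. $f^{>0<}=f$, and for $|\alpha|\ge1$, $f^{>\alpha<}(x)=\sum_{j_1=0}^{\alpha_1}\cdots\sum_{j_d=0}^{\alpha_d}\big(\prod_{\ell=1}^d\prod_{k_\ell\neq j_\ell}(x^{(\ell)}_{j_\ell}-x^{(\ell)}_{k_\ell})^{-1}\big)f(x^{(1)}_{j_1},\ldots,x^{(d)}_{j_d})$ on $U^{>\alpha<}$. $f$ is $C^0_{SDS}$ if continuous ($f^{<0>}:=f$); $C^k_{SDS}$ if $C^{k-1}_{SDS}$ and for all $|\alpha|=k$, $f^{>\alpha<}$ has a continuous extension $f^{<\alpha>}$ to $U^{<\alpha>}$. The same definitions apply to maps on $U^{<e_i>}\subseteq\mathbb{K}^{d+1}$ (which is open, resp. a product of sets with dense interior). Gauge on a topological vector space $E$ over a valued field: $q\colon E\to[0,\infty[$, $q(tx)=|t|q(x)$, all balls $\{q<r\}$ are $0$-neighbourhoods.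 A map $g$ on a subset $V\subseteq E$ is $C^{0,\sigma}$ if for each $x_0\in V$ and gauge $q$ on $F$ there are a gauge $p$ on $E$ and a neighbourhood $W$ of $x_0$ in $V$ with $q(g(y)-g(x))\le p(y-x)^\sigma$ for $x,y\in W$. $f$ is $C^{k,\sigma}_{SDS}$ if $C^k_{SDS}$ and all $f^{<\alpha>}$, $|\alpha|\le k$, are $C^{0,\sigma}$. *)

(* Defs.v *)
From HB Require Import structures.
From mathcomp Require Import all_boot all_order all_algebra.
From mathcomp Require Import all_classical all_reals.
From mathcomp Require Import topology function_spaces pseudometric_normed_Zmodule.

Set Implicit Arguments.
Unset Strict Implicit.
Unset Printing Implicit Defensive.
Import Order.TTheory GRing.Theory Num.Theory.
Local Open Scope classical_set_scope.
Local Open Scope ring_scope.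

HB.mixin Record Field_isTopField (K : Type) of Topological K & GRing.Field K := {
  tf_add_continuous : continuous (fun z : K * K => z.1 + z.2);
  tf_opp_continuous : continuous (fun z : K => - z);
  tf_mul_continuous : continuous (fun z : K * K => z.1 * z.2);
  tf_inv_continuous : forall x : K, x != 0 -> {for x, continuous (@GRing.inv K)};
  tf_hausdorff : hausdorff_space K;
  tf_nondiscrete : ~ (forall A : set K, open A)
}.

#[short(type="topFieldType")]
HB.structure Definition TopField :=
  {K of Field_isTopField K & Topological K & GRing.Field K}.

HB.mixin Record Lmodule_isTopVS (K : topFieldType) (V : Type)
    of Topological V & GRing.Lmodule K V := {
  tvs_add_continuous : continuous (fun z : V * V => z.1 + z.2);
  tvs_scale_continuous : continuous (fun z : K * V => z.1 *: z.2);
  tvs_hausdorff : hausdorff_space V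
}.

#[short(type="topVSType")]
HB.structure Definition TopVS (K : topFieldType) :=
  {V of Lmodule_isTopVS K V & Topological V & GRing.Lmodule K V}.

From mathcomp Require Import exp.

Definition is_absolute_value (K : topFieldType) (R : realType) (a : K -> R) :=
  [/\ forall x, 0 <= a x,
      forall x, a x = 0 <-> x = 0,
      forall x y, a (x * y) = a x * a y
    & forall x y, a (x + y) <= a x + a y].

Definition defines_topology (K : topFieldType) (R : realType) (a : K -> R) :=
  forall (x : K) (A : set K),
    nbhs x A <-> exists2 r : R, 0 < r & forall y, a (y - x) < r -> A y.

Definition valued_field (K : topFieldType) (R : realType) (a : K -> R) :=
  is_absolute_value a /\ defines_topology a.

Notation "K ^^ I" := {ptws I -> K} (at level 30) : type_scope.

(** Blocked coordinates: for a multi-index [al : I -> nat], the space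
    K^{d+|al|} has coordinates x^(l)_j, l in I, 0 <= j <= al l. *)
Definition blk (I : finType) (al : I -> nat) : finType :=
  {l : I & 'I_(al l).+1}.

Definition mindex_abs (I : finType) (al : I -> nat) : nat := \sum_(l : I) al l.

Definition choice_ix (I : finType) (al : I -> nat) : finType :=
  {dffun forall l : I, 'I_(al l).+1}.

Definition pick_pt (K : Type) (I : finType) (al : I -> nat)
   (x : blk al -> K) (s : choice_ix al) : I -> K :=
  fun l => x (Tagged (fun l => 'I_(al l).+1) (s l)).

Definition dom_ext (K : Type) (I : finType) (U : set (I -> K)) (al : I -> nat)
   : set (K ^^ blk al) :=
  [set x | forall s : choice_ix al, U (pick_pt x s)].

Arguments dom_ext {K I} U al _.

Definition dom_dq (K : Type) (I : finType) (U : set (I -> K)) (al : I -> nat)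
   : set (K ^^ blk al) :=
  [set x | dom_ext U al x /\
     forall (l : I) (j k : 'I_(al l).+1), j != k ->
       x (Tagged (fun l => 'I_(al l).+1) j) <> x (Tagged (fun l => 'I_(al l).+1) k)].

Arguments dom_dq {K I} U al _.

(** f^{>al<} (divided differences), given by the formula of the paper; for
    al = 0 the formula reduces to f itself (one summand, empty products). *)
Definition ddiff (K : topFieldType) (F : topVSType K) (I : finType)
   (f : (I -> K) -> F) (al : I -> nat) (x : K ^^ blk al) : F :=
  \sum_(s : choice_ix al)
     (\prod_(l : I) \prod_(k : 'I_(al l).+1 | k != s l)
        (x (Tagged (fun l => 'I_(al l).+1) (s l))
         - x (Tagged (fun l => 'I_(al l).+1) k))^-1) *: f (pick_pt x s).

(** h is a continuous extension of f^{>al<} to U^{<al>} (i.e. a candidate f^{<al>}) *)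
Definition is_sds_ext (K : topFieldType) (F : topVSType K) (I : finType)
   (U : set (I -> K)) (f : (I -> K) -> F) (al : I -> nat) (h : K ^^ blk al -> F) :=
  {within dom_ext U al, continuous h} /\
  forall x, dom_dq U al x -> h x = ddiff f x.

Arguments is_sds_ext {K F I} U f al h.

(** C^k_SDS (f : U -> F modelled by a total function; values off U are irrelevant) *)
Fixpoint CkSDS (K : topFieldType) (F : topVSType K) (I : finType)
   (U : set (I -> K)) (k : nat) (f : (I -> K) -> F) : Prop :=
  match k with
  | 0 => {within (U : set (K ^^ I)), continuous (f : K ^^ I -> F)}
  | k'.+1 => CkSDS U k' f /\
      forall al : I -> nat, mindex_abs al = k'.+1 ->
        exists h : K ^^ blk al -> F, is_sds_ext U f al h
  end.

Definition gauge_pt (K : topFieldType) (R : realType) (a : K -> R) (I : finType)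
   (q : (I -> K) -> R) :=
  [/\ forall x, 0 <= q x,
      forall (t : K) x, q (fun i => t * x i) = a t * q x
    & forall r : R, 0 < r -> nbhs ((fun _ => 0) : K ^^ I) [set y | q y < r]].

Definition gauge_vs (K : topFieldType) (R : realType) (a : K -> R)
   (F : topVSType K) (q : F -> R) :=
  [/\ forall x, 0 <= q x,
      forall (t : K) x, q (t *: x) = a t * q x
    & forall r : R, 0 < r -> nbhs (0 : F) [set y | q y < r]].

Definition C0sigma (K : topFieldType) (R : realType) (a : K -> R) (sigma : R)
   (F : topVSType K) (I : finType) (V : set (I -> K)) (g : (I -> K) -> F) :=
  forall x0, V x0 ->
  forall q : F -> R, gauge_vs a q ->
  exists p : (I -> K) -> R, gauge_pt a p /\
  exists W : set (K ^^ I), nbhs (x0 : K ^^ I) W /\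
    forall x y, V x -> W x -> V y -> W y ->
      q (g y - g x) <= powR (p (fun i => y i - x i)) sigma.

Definition CksigmaSDS (K : topFieldType) (R : realType) (a : K -> R) (sigma : R)
   (F : topVSType K) (I : finType) (U : set (I -> K)) (k : nat)
   (f : (I -> K) -> F) : Prop :=
  CkSDS U k f /\
  forall al : I -> nat, (mindex_abs al <= k)%N ->
    forall h : K ^^ blk al -> F, is_sds_ext U f al h -> C0sigma a sigma (dom_ext U al) h.

Definition unit_mi (d : nat) (i : 'I_d) : 'I_d -> nat := fun l => nat_of_bool (l == i).

Definition sds_domain (K : topFieldType) (d : nat) (U : set ('I_d -> K)) :=
  open (U : set (K ^^ 'I_d)) \/
  exists Us : 'I_d -> set K,
    (forall i, Us i `<=` closure (interior (Us i))) /\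
    U = [set x | forall i, Us i (x i)].

(* Main.v *)
Require Import Defs.
From HB Require Import structures.
From mathcomp Require Import all_boot all_order all_algebra.
From mathcomp Require Import all_classical all_reals all_analysis.
From mathcomp Require Import ring zify.
Import Order.TTheory GRing.Theory Num.Theory.
Local Open Scope classical_set_scope.
Local Open Scope ring_scope.
Set Implicit Arguments.
Unset Strict Implicit.
Unset Printing Implicit Defensive.

Definition xn (K : Type) (I : finType) (al : I -> nat) (x : blk al -> K) (l : I) (n : nat) : K :=
  x (Tagged (fun l => 'I_(al l).+1) (@inord (al l) n)).

Lemma xnE (K : Type) (I : finType) (al : I -> nat) (x : blk al -> K) l (j : 'I_(al l).+1) :
  x (Tagged (fun l => 'I_(al l).+1) j) = xn x l (val j).
Proof. by rewrite /xn inord_val. Qed.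

Definition wt (K : fieldType) (X : nat -> K) (n j : nat) : K :=
  \prod_(0 <= k < n.+1 | k != j) (X j - X k)^-1.

Lemma wt_eq (K : fieldType) (X Y : nat -> K) n n' j j' :
  n = n' -> j = j' -> (forall k, (k <= n)%N -> X k = Y k) -> (j <= n)%N ->
  wt X n j = wt Y n' j'.
Proof.
move=> <- <- XY jn; rewrite /wt big_nat_cond [RHS]big_nat_cond.
apply: eq_bigr => k /andP[/andP[_ kn] _]; rewrite !XY //.
Qed.

Lemma wt00 (K : fieldType) (X : nat -> K) n j : n = 0%N -> j = 0%N -> wt X n j = 1.
Proof. by move=> -> ->; rewrite /wt big_mkcond big_nat1. Qed.

Lemma ddiffE (K : topFieldType) (F : topVSType K) (I : finType)
   (g : (I -> K) -> F) (al : I -> nat) (x : K ^^ blk al) :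
  ddiff g x = \sum_(s : choice_ix al)
     (\prod_(l : I) wt (xn x l) (al l) (s l)) *: g (fun l => xn x l (s l)).
Proof.
apply: eq_bigr => s _; congr (_ *: g _); last first.
  by apply: functional_extensionality_dep => l; rewrite /pick_pt xnE.
apply: eq_bigr => l _; rewrite /wt big_mkord.
apply: eq_big => [k|k _]; first by [].
by rewrite !xnE.
Qed.

Lemma partfrac (K : fieldType) (X : nat -> K) (a : nat) (s : seq nat) (y : K) :
  uniq [seq X t | t <- a :: s] -> (forall t, t \in a :: s -> y != X t) ->
  (\prod_(t <- a :: s) (y - X t))^-1 =
  \sum_(t <- a :: s) (\prod_(u <- a :: s | u != t) (X t - X u))^-1 * (y - X t)^-1.
Proof.
elim: s a y => [|b s IH] a y.
  move=> _ _; rewrite !big_seq1 big_cons big_nil eqxx /=.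
  by rewrite invr1 mul1r.
have {IH}IH := IH b; move: IH; set s' := b :: s => IH; clearbody s'.
rewrite map_cons cons_uniq => /andP[aX uX] Hy.
have ya : y - X a != 0 by rewrite subr_eq0 Hy // mem_head.
have anot : a \notin s' by apply: contra aX => as_; apply/mapP; exists a.
have Hs : forall t, t \in s' -> X a != X t.
  by move=> t ts; apply: contraNneq aX => ->; apply/mapP; exists t.
rewrite big_cons invfM big_cons /=.
rewrite [\prod_(u <- a :: s' | u != a) _]big_cons eqxx /=.
have -> : \prod_(u <- s' | u != a) (X a - X u) = \prod_(u <- s') (X a - X u).
  rewrite big_seq_cond [RHS]big_seq; apply: eq_bigl => u.
  case: (boolP (u \in s')) => //= us; apply/eqP => ua; move: anot; by rewrite -ua us.
have Hs' : forall t, t \in s' -> X a != X t by [].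
rewrite (IH (X a) uX); last by move=> t ts; rewrite Hs.
rewrite (IH y uX); last by move=> t ts; apply: Hy; rewrite in_cons ts orbT.
rewrite mulr_sumr mulr_suml -big_split /= !big_seq.
apply: eq_bigr => t ts.
have ta : a != t by apply: contraNneq anot => ->.
rewrite big_cons ta invfM.
have h1 : X a - X t != 0 by rewrite subr_eq0 Hs.
have h3 : y - X t != 0 by rewrite subr_eq0 Hy // in_cons ts orbT.
set P := (\prod_(j <- s' | j != t) _)^-1.
have -> : X t - X a = - (X a - X t) by rewrite opprB.
field.
by rewrite h1 h3 ya oppr_eq0 h1.
Qed.

Lemma partfrac_iota (K : fieldType) (X : nat -> K) (m : nat) :
  (0 < m)%N ->
  (forall a b, (a <= m)%N -> (b <= m)%N -> a != b -> X a != X b) ->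
  \prod_(1 <= k < m.+1) (X 0%N - X k)^-1 =
  \sum_(1 <= j < m.+1) (\prod_(1 <= k < m.+1 | k != j) (X j - X k)^-1) * (X 0%N - X j)^-1.
Proof.
move=> m0 Hd.
have Hl : index_iota 1 m.+1 = 1%N :: iota 2 m.-1.
  by rewrite /index_iota subSS subn0; case: (m) m0.
rewrite prodfV [RHS](eq_bigr (fun j => (\prod_(k <- index_iota 1 m.+1 | k != j) (X j - X k))^-1
   * (X 0%N - X j)^-1)); last by move=> j _; rewrite prodfV.
rewrite Hl partfrac //.
- rewrite -Hl map_inj_in_uniq ?iota_uniq // => a b.
  rewrite !mem_index_iota => /andP[_ am] /andP[_ bm] Xab.
  case: (eqVneq a b) => // ab.
  have := Hd a b; rewrite Xab eqxx ab.
  by move=> /(_ _ _ isT) /=; rewrite -ltnS am -ltnS bm => /(_ isT isT).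
- move=> t; rewrite -Hl mem_index_iota => /andP[t1 tm].
  by apply: Hd => //; rewrite eq_sym -lt0n.
Qed.


Lemma ptws_cont_into (T : topologicalType) (I : eqType) (K : topologicalType)
  (g : T -> {ptws I -> K}) : (forall i, continuous (fun t => g t i)) -> continuous g.
Proof.
move=> H t; apply/cvg_sup => i; apply/cvg_image => //.
  by apply/seteqP; split => // y _; exists (fun _ => y).
move=> B /= nB.
exists ((fun f : I -> K => f i) @^-1` B).
  exact: (H i t B nB).
by apply/seteqP; split => [y [f /= ? <-]|y By] //; exists (fun _ => y).
Qed.

Lemma precomp_cont (K : topologicalType) (I J : eqType) (tf : J -> I) :
  continuous (fun z : {ptws I -> K} => ((fun j => z (tf j)) : {ptws J -> K})).
Proof.
apply: ptws_cont_into => j.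
exact: (@proj_continuous I (fun _ => K) (tf j)).
Qed.

Lemma within_comp (T1 T2 T3 : topologicalType) (A : set T1) (B : set T2)
   (p : T1 -> T2) (g : T2 -> T3) :
  continuous p -> (forall x, A x -> B (p x)) -> {within B, continuous g} ->
  {within A, continuous (g \o p)}.
Proof.
move=> pc AB /subspace_continuousP gc; apply/subspace_continuousP => x Ax.
move=> Q HQ; have := gc _ (AB _ Ax) Q HQ.
rewrite /= !nbhs_simpl /within /= => Hn.
have := pc x _ Hn; rewrite nbhs_simpl /=.
by apply: filterS => y Hy Ay; apply: Hy; apply: AB.
Qed.

Lemma C0sigma_comp (K : topFieldType) (F : topVSType K) (R : realType) (a : K -> R) (sigma : R)
  (I J : finType) (V : set (I -> K)) (W : set (J -> K)) (tf : J -> I) (H : (J -> K) -> F) :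
  (forall x, V x -> W (fun j => x (tf j))) -> C0sigma a sigma W H ->
  C0sigma a sigma V (fun x => H (fun j => x (tf j))).
Proof.
move=> VW HC x0 Vx0 q gq.
have [p [gp [W' [nW' HW']]]] := HC _ (VW _ Vx0) q gq.
exists (fun z => p (fun j => z (tf j))); split.
  case: gp => p0 ph pn; split => // r r0; have := pn r r0.
  exact: (@precomp_cont K I J tf (fun _ => 0)).
exists ((fun z : {ptws I -> K} => ((fun j => z (tf j)) : {ptws J -> K})) @^-1` W'); split.
  exact: (@precomp_cont K I J tf x0).
move=> x y Vx Wx Vy Wy.
exact: (HW' _ _ (VW _ Vx) Wx (VW _ Vy) Wy).
Qed.

Lemma tr_cont (K : topFieldType) (c : K) : continuous (fun z : K => z + c).
Proof.
move=> z.
apply: (@continuous_comp _ _ _ (fun z : K => (z, c)) (fun p : K * K => p.1 + p.2)).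
  by apply: cvg_pair => //; exact: cvg_cst.
exact: tf_add_continuous.
Qed.

Lemma near_seq (K : topFieldType) (a : K) (s : seq K) :
  \forall z \near a, forall w, w \in s -> w != a -> z != w.
Proof.
elim: s => [|b s IH]; first by apply: nearW => z w.
have Hb : \forall z \near a, b != a -> z != b.
  case: (eqVneq b a) => [->|ba]; first by apply: nearW.
  have : open (~` [set b]).
    rewrite openC; apply: accessible_closed_set1; apply: hausdorff_accessible.
    exact: tf_hausdorff.
  move=> ob.
  have Hn : nbhs a (~` [set b]).
    by apply: open_nbhs_nbhs; split => // /= ab; move: ba; rewrite ab eqxx.
  by apply: filterS Hn => z /= zb _; apply/eqP.
apply: filterS2 IH Hb => z H1 H2 w; rewrite in_cons => /orP[/eqP->|ws].
  exact: H2.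
exact: H1.
Qed.

Lemma open_notin (K : topFieldType) (A : set K) (a : K) (s : seq K) :
  open A -> A a -> exists2 w, A w & w \notin s.
Proof.
move=> oA Aa; case: (pselect (exists2 w, A w & w \notin s)) => // H; exfalso.
have Hs : forall w, A w -> w \in s.
  by move=> w Aw; apply/negPn/negP => ws; apply: H; exists w.
have na : nbhs a [set a].
  have nA : nbhs a A by apply: open_nbhs_nbhs.
  apply: filterS (filterI nA (near_seq a s)) => z [Az Hz] /=.
  apply/eqP; apply: contraT => za.
  by have := Hz z (Hs z Az) za; rewrite eqxx.
apply: (@tf_nondiscrete K) => B; rewrite openE => p Bp.
rewrite /interior.
have np : nbhs p [set p].
  have Hc := @tr_cont K (a - p) p.
  have e : p + (a - p) = a by rewrite addrC subrK.
  have : nbhs (p + (a - p)) [set a] by rewrite e.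
  move=> /Hc; rewrite nbhs_simpl /=; apply: filterS => z /= /(congr1 (fun w => w - (a - p))).
  by rewrite addrK opprB addrC subrK.
by apply: filterS np => z /= ->.
Qed.

Lemma dfwith_cont (K : topFieldType) (B : eqType) (y : {ptws B -> K}) (b : B) :
  continuous (fun w : K => (dfwith y b w : {ptws B -> K})).
Proof. exact: (@dfwith_continuous B (fun _ => K) y b). Qed.

Lemma perturb (K : topFieldType) (B : finType) (x : {ptws B -> K})
  (O : set {ptws B -> K}) (T : B -> set K) :
  open O -> O x -> (forall b, open (T b)) ->
  (forall b W, nbhs (x b) W -> exists w, W w /\ T b w) ->
  exists y : {ptws B -> K}, [/\ O y, forall b, T b (y b) & injective y].
Proof.
move=> oO Ox oT HT.
suff : forall s : seq B, uniq s -> exists y : {ptws B -> K},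
   [/\ O y, forall b, b \in s -> T b (y b), forall b, b \notin s -> y b = x b &
       {in s &, injective y}].
  case/(_ (enum B) (enum_uniq B)) => y [Oy Ty _ Iy]; exists y; split => //.
    by move=> b; apply: Ty; rewrite mem_enum.
  by move=> b c; apply: Iy; rewrite mem_enum.
elim => [|b s IH] /=.
  by move=> _; exists x; split.
move=> /andP[bs us]; have [y [Oy Ty Xy Iy]] := IH us.
pose W := [set w | O (dfwith y b w)].
have oW : open W.
  by have := @open_comp _ _ (fun w : K => (dfwith y b w : {ptws B -> K})) O; apply => // w _; apply: dfwith_cont.
have Wyb : W (y b).
  rewrite /W /=; have -> : dfwith y b (y b) = y :> (B -> K).
    by apply: functional_extensionality_dep => c; case: dfwithP.
  exact: Oy.
have [w0 [Ww0 Tw0]] : exists w, W w /\ T b w.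
  by apply: HT; rewrite -(Xy b bs); apply: open_nbhs_nbhs.
have [w [Ww Tw] wn] := @open_notin K (W `&` T b) w0 (map y s) (openI oW (oT b)) (conj Ww0 Tw0).
exists (dfwith y b w); split.
- exact: Ww.
- move=> c; rewrite in_cons; case: (eqVneq c b) => [->|cb] /= Hc.
    by rewrite dfwithin.
  by rewrite dfwithout 1?eq_sym //; apply: Ty.
- move=> c; rewrite in_cons negb_or => /andP[cb cs].
  by rewrite dfwithout 1?eq_sym //; apply: Xy.
- move=> c c'; rewrite !in_cons.
  case: (eqVneq c b) => [->|cb] /=; case: (eqVneq c' b) => [->|c'b] //= Hc Hc'.
  + rewrite dfwithin dfwithout 1?eq_sym // => E.
    by move: wn; rewrite E; move/negP; case; apply: map_f.
  + rewrite dfwithin dfwithout 1?eq_sym // => E.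
    by move: wn; rewrite -E; move/negP; case; apply: map_f.
  + by rewrite !dfwithout 1?eq_sym //; apply: Iy.
Qed.

Lemma dense_dq (K : topFieldType) (d : nat) (U : set ('I_d -> K)) (al : 'I_d -> nat) :
  sds_domain U -> forall x, dom_ext U al x ->
  forall N, nbhs (x : K ^^ blk al) N -> exists y, dom_dq U al y /\ N y.
Proof.
have distinct : forall y : K ^^ blk al, injective y ->
    forall (l : 'I_d) (j k : 'I_(al l).+1), j != k ->
      y (Tagged (fun l => 'I_(al l).+1) j) <> y (Tagged (fun l => 'I_(al l).+1) k).
  move=> y iy l j k jk E; have := eq_from_Tagged (iy _ _ E) => jk'.
  by move: jk; rewrite jk' eqxx.
move=> [oU|[Us [HUs ->]]] x Hx N nN.
  have nD : nbhs (x : K ^^ blk al) (dom_ext U al).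
    apply: (filterS _ (@filter_forall _ (choice_ix al)
       (fun s (y : K ^^ blk al) => U (pick_pt y s)) (nbhs (x : K ^^ blk al)) _ _)) => [y //|s].
    have := @precomp_cont K (blk al) 'I_d (fun l => Tagged (fun l => 'I_(al l).+1) (s l)) x.
    apply; apply: open_nbhs_nbhs; split => //; exact: Hx.
  have [y [Oy _ iy]] := @perturb K (blk al) x (interior (N `&` dom_ext U al)) (fun _ => setT)
    (@open_interior _ _) (filterI nN nD) (fun _ => openT)
    (fun b W nW => ex_intro _ (x b) (conj (nbhs_singleton nW) I)).
  have [Ny Dy] := nbhs_singleton Oy.
  by exists y; split => //; split => //; apply: distinct.
have xb : forall b : blk al, Us (tag b) (x b).
  case=> l j.
  pose s : choice_ix al := finfun (fun l' => @inord (al l') (if l' == l then nat_of_ord j else 0%N)).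
  have := Hx s l; rewrite /pick_pt ffunE eqxx inord_val //.
have HT : forall b W, nbhs (x b) W -> exists w, W w /\ interior (Us (tag b)) w.
  by move=> b W nW; have [w [h1 h2]] := HUs _ _ (xb b) W nW; exists w.
have [y [Oy Ty iy]] := @perturb K (blk al) x (interior N) (fun b => interior (Us (tag b)))
    (@open_interior _ _) nN (fun b => @open_interior _ _) HT.
exists y; split; last exact: nbhs_singleton Oy.
split; last by apply: distinct.
by move=> s l; apply: interior_subset; apply: (Ty (Tagged (fun l => 'I_(al l).+1) (s l))).
Qed.

Lemma ext_unique (K : topFieldType) (F : topVSType K) (d : nat) (U : set ('I_d -> K))
  (f : ('I_d -> K) -> F) (al : 'I_d -> nat) (g1 g2 : K ^^ blk al -> F) :
  sds_domain U -> is_sds_ext U f al g1 -> is_sds_ext U f al g2 ->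
  forall x, dom_ext U al x -> g1 x = g2 x.
Proof.
move=> sU [c1 e1] [c2 e2] x Ax.
have cl : closure (dom_dq U al) x.
  move=> B nB; have [y [Dy By]] := dense_dq sU Ax nB; by exists y.
have PF : ProperFilter (within (dom_dq U al) (nbhs (x : K ^^ blk al))).
  exact: (@within_nbhs_proper _ _ _ cl).
have fin : forall g : K ^^ blk al -> F, {within dom_ext U al, continuous g} ->
    g @ within (dom_dq U al) (nbhs (x : K ^^ blk al)) --> g x.
  move=> g /subspace_continuousP /(_ x Ax) cg; apply: cvg_trans cg.
  move=> P; rewrite /= !nbhs_simpl /within /=.
  by apply: filterS => y Hy Dy; apply: Hy; case: Dy.
have h1 := fin g1 c1.
have h2 : g1 @ within (dom_dq U al) (nbhs (x : K ^^ blk al)) --> g2 x.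
  apply: cvg_trans (fin g2 c2); apply: fmap_within_eq => y.
  by rewrite inE => Dy; rewrite e1 // e2.
exact: (@cvg_unique _ (@tvs_hausdorff K F) _ (fmap_proper_filter g1 PF) _ _ h1 h2).
Qed.

Section Core.
Variables (d : nat) (al : 'I_d -> nat) (i : 'I_d).

Local Notation E := (blk (unit_mi i)).
Local Notation TE := (fun l : 'I_d => 'I_(unit_mi i l).+1).
Local Notation TA := (fun l : 'I_d => 'I_(al l).+1).

Definition e0 (l : 'I_d) : E := Tagged TE (ord0 : 'I_(unit_mi i l).+1).
Definition e1 : E := Tagged TE (@inord (unit_mi i i) 1).

Definition bt (t : E) : nat :=
  if tag t == i then (if nat_of_ord (tagged t) == 0%N then 0%N else (al i).-1) else al (tag t).
Definition off (t : E) : nat := if (tag t == i) && (nat_of_ord (tagged t) != 0%N) then 1%N else 0%N.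
Local Notation TB := (fun t : E => 'I_(bt t).+1).

Definition tau (p : blk bt) : blk al :=
  Tagged TA (@inord (al (tag (tag p))) (off (tag p) + nat_of_ord (tagged p))).

Lemma umi_ii : unit_mi i i = 1%N.
Proof. by rewrite /unit_mi eqxx. Qed.
Lemma umi_l l : l != i -> unit_mi i l = 0%N.
Proof. by rewrite /unit_mi => /negbTE ->. Qed.

Lemma val_e1 : nat_of_ord (tagged e1) = 1%N.
Proof. by rewrite /= inordK // umi_ii. Qed.
Lemma tag_e1 : tag e1 = i. Proof. by []. Qed.

Lemma TaggedE (I : finType) (T : I -> nat) (l : I) (j k : 'I_(T l).+1) :
  nat_of_ord j = nat_of_ord k -> Tagged (fun l => 'I_(T l).+1) j = Tagged (fun l => 'I_(T l).+1) k.
Proof. by move=> /ord_inj ->. Qed.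

Lemma bt_e0 l : bt (e0 l) = if l == i then 0%N else al l.
Proof. by rewrite /bt /=; case: eqP. Qed.
Lemma bt_e1 : bt e1 = (al i).-1.
Proof. by rewrite /bt val_e1 /= eqxx. Qed.
Lemma off_e0 l : off (e0 l) = 0%N.
Proof. by rewrite /off /= andbF. Qed.
Lemma off_e1 : off e1 = 1%N.
Proof. by rewrite /off val_e1 /= eqxx. Qed.

Lemma E_cases (t : E) : t = e1 \/ t = e0 (tag t).
Proof.
case: t => l j /=.
case: (eqVneq l i) => [eli|nli].
  subst l; have Hj2 : (val j < 2)%N by move: (ltn_ord j); rewrite [in X in (_ < X)%N -> _]umi_ii.
  case: j Hj2 => [[|[|n]] Hj] //= _.
    by right; apply: TaggedE.
  by left; apply: TaggedE; rewrite /= inordK // umi_ii.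
right; apply: TaggedE => /=.
have : (val j < 1)%N by move: (ltn_ord j); rewrite [in X in (_ < X)%N -> _]umi_l.
by rewrite ltnS leqn0 => /eqP.
Qed.

Lemma e0_inj l l' : e0 l = e0 l' -> l = l'.
Proof. by move/(congr1 tag). Qed.

Lemma e0_neq_e1 l : e0 l != e1.
Proof.
apply/eqP => H; have := congr1 tag H; rewrite tag_e1 /= => eli; subst l.
by have := congr1 (fun t : E => nat_of_ord (tagged t)) H; rewrite /= val_e1.
Qed.

Lemma bigE (R : Type) (idx : R) (op : Monoid.com_law idx) (G : E -> R) :
  \big[op/idx]_(t : E) G t = op (G e1) (op (G (e0 i)) (\big[op/idx]_(l | l != i) G (e0 l))).
Proof.
rewrite (bigD1 e1) //= (bigD1 (e0 i)) /=; last by rewrite e0_neq_e1.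
congr (op _ (op _ _)).
rewrite (reindex_onto (fun l => e0 l) (fun t => tag t)) /=; last first.
  move=> t /andP[te1 te0]; case: (E_cases t) => [Ht|Ht]; last by rewrite -Ht.
  by move: te1; rewrite Ht eqxx.
apply: eq_bigl => l; rewrite eqxx andbT e0_neq_e1 /=.
by rewrite (inj_eq (@e0_inj)).
Qed.

Hypothesis al_i : (0 < al i)%N.

Definition phi (K : Type) (x : blk al -> K) : blk bt -> K := fun p => x (tau p).

Lemma xn_phi (K : Type) (x : blk al -> K) t n :
  (n <= bt t)%N -> xn (phi x) t n = xn x (tag t) (off t + n).
Proof. by move=> nb; rewrite /xn /phi /tau /= inordK. Qed.

Lemma ord_bt_e0i (j : 'I_(bt (e0 i)).+1) : val j = 0%N.
Proof.
have : (val j < 1)%N by move: (ltn_ord j); rewrite [in X in (_ < X)%N -> _]bt_e0 eqxx.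
by rewrite ltnS leqn0 => /eqP.
Qed.

Lemma le_bt_e1 (j : 'I_(bt e1).+1) : (val j < al i)%N.
Proof.
by move: (ltn_ord j); rewrite [in X in (_ < X)%N -> _]bt_e1 prednK.
Qed.

Lemma le_bt_e0 l (j : 'I_(bt (e0 l)).+1) : l != i -> (val j <= al l)%N.
Proof.
by move=> nli; move: (ltn_ord j); rewrite [in X in (_ < X)%N -> _]bt_e0 (negbTE nli).
Qed.

Definition Phi (s' : choice_ix bt) : choice_ix al :=
  finfun (fun l => @inord (al l) (if l == i then (nat_of_ord (s' e1)).+1 else nat_of_ord (s' (e0 l)))).

Definition Psi (s : choice_ix al) : choice_ix bt :=
  finfun (fun t => @inord (bt t) (nat_of_ord (s (tag t)) - off t)).

Lemma Phi_i (s' : choice_ix bt) : nat_of_ord (Phi s' i) = (nat_of_ord (s' e1)).+1.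
Proof. by rewrite ffunE eqxx inordK // ltnS le_bt_e1. Qed.

Lemma Phi_l (s' : choice_ix bt) l : l != i -> nat_of_ord (Phi s' l) = nat_of_ord (s' (e0 l)).
Proof. by move=> nli; rewrite ffunE (negbTE nli) inordK // ltnS le_bt_e0. Qed.

Lemma PhiK (s' : choice_ix bt) : Psi (Phi s') = s'.
Proof.
apply/ffunP => t; apply: ord_inj; rewrite ffunE.
case: (E_cases t) => Ht.
  rewrite Ht /= inordK; first by rewrite Phi_i off_e1 subn1.
  by rewrite Phi_i off_e1 subn1 ltnS -ltnS prednK // le_bt_e1.
move: Ht; move: (tag t) => l Ht; rewrite Ht /= off_e0 subn0.
case: (eqVneq l i) => [eli|nli].
  by subst l; rewrite !ord_bt_e0i.
by rewrite Phi_l // inordK // ltnS le_bt_e0.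
Qed.

Lemma PsiK (s : choice_ix al) : nat_of_ord (s i) != 0%N -> Phi (Psi s) = s.
Proof.
move=> si0; apply/ffunP => l; apply: ord_inj; rewrite ffunE.
case: (eqVneq l i) => [->|nli].
  have P1 : nat_of_ord (Psi s e1) = (nat_of_ord (s i)).-1.
    rewrite ffunE inordK /= off_e1 ?subn1 // bt_e1.
    rewrite (prednK al_i) -ltnS (prednK (n:=nat_of_ord (s i))) ?lt0n //.
  by rewrite P1 prednK ?lt0n // inordK.
have P2 : nat_of_ord (Psi s (e0 l)) = nat_of_ord (s l).
  by rewrite ffunE /= off_e0 subn0 inordK // bt_e0 (negbTE nli).
by rewrite P2 inordK.
Qed.

Definition u0 : choice_ix (unit_mi i) := finfun (fun l => ord0).
Definition u1 : choice_ix (unit_mi i) := finfun (fun l => @inord (unit_mi i l) (l == i)).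

Lemma u_cases (u : choice_ix (unit_mi i)) : u = u0 \/ u = u1.
Proof.
have Hl : forall l, l != i -> nat_of_ord (u l) = 0%N.
  move=> l nli; have : (nat_of_ord (u l) < 1)%N.
    by move: (ltn_ord (u l)); rewrite [in X in (_ < X)%N -> _]umi_l.
  by rewrite ltnS leqn0 => /eqP.
have : (nat_of_ord (u i) < 2)%N by move: (ltn_ord (u i)); rewrite [in X in (_ < X)%N -> _]umi_ii.
case Hui: (nat_of_ord (u i)) => [|[|n]] // _.
  left; apply/ffunP => l; apply: ord_inj; rewrite ffunE /=.
  by case: (eqVneq l i) => [->|nli]; [rewrite Hui | rewrite Hl].
right; apply/ffunP => l; apply: ord_inj; rewrite ffunE /=.
case: (eqVneq l i) => [->|nli]; first by rewrite Hui inordK // umi_ii.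
by rewrite Hl // inordK.
Qed.

Lemma u0_neq_u1 : u0 != u1.
Proof.
apply/eqP => /ffunP /(_ i); rewrite !ffunE => /(congr1 val) /=.
by rewrite eqxx inordK // umi_ii.
Qed.

Lemma sum_u (V : zmodType) (G : choice_ix (unit_mi i) -> V) :
  \sum_u G u = G u0 + G u1.
Proof.
rewrite (bigD1 u0) //= (bigD1 u1) /=; last by rewrite eq_sym u0_neq_u1.
rewrite big1 ?addr0 // => u /andP[n0 n1].
by case: (u_cases u) => Hu; [move: n0|move: n1]; rewrite Hu eqxx.
Qed.

Variables (K : topFieldType) (F : topVSType K).

Lemma leq_bt (t : E) (j : 'I_(bt t).+1) : (nat_of_ord j <= bt t)%N.
Proof. by rewrite -ltnS ltn_ord. Qed.

Lemma W_eq (x : blk al -> K) (s' : choice_ix bt) :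
  \prod_(t : E) wt (xn (phi x) t) (bt t) (s' t) =
  (\prod_(1 <= k < (al i).+1 | k != Phi s' i) (xn x i (Phi s' i) - xn x i k)^-1) *
  \prod_(l | l != i) wt (xn x l) (al l) (Phi s' l).
Proof.
rewrite (@bigE _ 1 *%R) /=.
have -> : wt (xn (phi x) (e0 i)) (bt (e0 i)) (s' (e0 i)) = 1.
  by apply: wt00; [rewrite bt_e0 eqxx | exact: ord_bt_e0i].
rewrite mul1r; congr (_ * _).
  rewrite (@wt_eq _ _ (fun k => xn x i k.+1) _ ((al i).-1) _ (nat_of_ord (s' e1))) //;
    last 3 first.
  - by rewrite bt_e1.
  - by move=> k kb; rewrite xn_phi // off_e1 add1n.
  - exact: leq_bt.
  rewrite /wt Phi_i big_add1 /= (prednK al_i).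
  by apply: eq_bigl => k; rewrite eqSS.
apply: eq_bigr => l nli; apply: wt_eq.
- by rewrite bt_e0 (negbTE nli).
- by rewrite Phi_l.
- by move=> k kb; rewrite xn_phi // off_e0 add0n.
- exact: leq_bt.
Qed.

Lemma wt_two (X : nat -> K) : wt X 1 0 = (X 0%N - X 1%N)^-1.
Proof. by rewrite /wt big_ltn_cond //= big_ltn_cond //= big_geq // mulr1. Qed.

Lemma wt_two' (X : nat -> K) : wt X 1 1 = (X 1%N - X 0%N)^-1.
Proof. by rewrite /wt big_ltn_cond //= big_ltn_cond //= big_geq // mulr1. Qed.

Lemma Hy_eq (x : blk al -> K) (s' : choice_ix bt) (f : ('I_d -> K) -> F) :
  ddiff f (fun t => xn (phi x) t (s' t)) =
    (xn x i 0 - xn x i (Phi s' i))^-1 *: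
       f (fun l => xn x l (if l == i then 0%N else nat_of_ord (Phi s' l)))
  + (xn x i (Phi s' i) - xn x i 0)^-1 *: f (fun l => xn x l (Phi s' l)).
Proof.
set y := fun t => xn (phi x) t (s' t).
have Y0 : forall l, xn y l 0 = xn x l (if l == i then 0%N else nat_of_ord (Phi s' l)).
  move=> l; rewrite /xn.
  have -> : Tagged TE (@inord (unit_mi i l) 0) = e0 l by apply: TaggedE; rewrite inordK.
  rewrite /y xn_phi ?leq_bt //= off_e0 add0n.
  case: (eqVneq l i) => [eli|nli]; first by subst l; rewrite ord_bt_e0i.
  by rewrite Phi_l.
have Y1 : xn y i 1 = xn x i (Phi s' i).
  by rewrite /xn -/e1 /y xn_phi ?leq_bt // off_e1 add1n Phi_i.
rewrite ddiffE sum_u; congr (_ *: f _ + _ *: f _).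
- rewrite (bigD1 i) //= big1 ?mulr1; last first.
    by move=> l nli; apply: wt00; [exact: umi_l | rewrite ffunE].
  have U0i : nat_of_ord (u0 i) = 0%N by rewrite ffunE.
  rewrite (wt_eq umi_ii U0i (fun _ _ => erefl) (leq_ord _)).
  by rewrite wt_two Y1 Y0 eqxx.
- apply: functional_extensionality_dep => l; rewrite ffunE Y0 //.
- rewrite (bigD1 i) //= big1 ?mulr1; last first.
    move=> l nli; apply: wt00; first exact: umi_l.
    by rewrite ffunE (negbTE nli) inordK.
  have U1i : nat_of_ord (u1 i) = 1%N by rewrite ffunE eqxx inordK // umi_ii.
  rewrite (wt_eq umi_ii U1i (fun _ _ => erefl) (leq_ord _)).
  by rewrite wt_two' Y1 Y0 eqxx.
- apply: functional_extensionality_dep => l; rewrite ffunE.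
  case: (eqVneq l i) => [->|nli]; first by rewrite inordK ?umi_ii // Y1.
  by rewrite inordK // Y0 (negbTE nli).
Qed.

Lemma drop0 (R : Type) (idx : R) (op : Monoid.law idx) (G : nat -> R) n :
  \big[op/idx]_(0 <= k < n.+1 | k != 0%N) G k = \big[op/idx]_(1 <= k < n.+1) G k.
Proof.
rewrite big_ltn_cond //= big_nat_cond [RHS]big_nat_cond.
by apply: eq_bigl => k; case: k => [|k] //=; rewrite !andbT.
Qed.

Lemma main_id (x : blk al -> K) (f : ('I_d -> K) -> F) (h : (E -> K) -> F) :
  (forall a b, (a <= al i)%N -> (b <= al i)%N -> a != b -> xn x i a != xn x i b) ->
  (forall s' : choice_ix bt,
     h (fun t => xn (phi x) t (s' t)) = ddiff f (fun t => xn (phi x) t (s' t))) ->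
  ddiff f x = ddiff h (phi x).
Proof.
move=> Hd Hh.
set X := xn x i.
pose A (s : choice_ix al) := \prod_(l | l != i) wt (xn x l) (al l) (s l).
pose C (j : nat) := \prod_(1 <= k < (al i).+1 | k != j) (X j - X k)^-1.
pose P0 (s : choice_ix al) := (fun l => xn x l (if l == i then 0%N else nat_of_ord (s l))).
pose G (s : choice_ix al) := (C (s i) * A s) *: ((X 0%N - X (s i))^-1 *: f (P0 s)
    + (X (s i) - X 0%N)^-1 *: f (fun l => xn x l (s l))).
have R1 : ddiff h (phi x) = \sum_(s' : choice_ix bt) G (Phi s').
  rewrite ddiffE; apply: eq_bigr => s' _; rewrite Hh Hy_eq W_eq.
  by [].
have R2 : \sum_(s' : choice_ix bt) G (Phi s') = \sum_(s : choice_ix al | nat_of_ord (s i) != 0%N) G s.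
  rewrite [RHS](reindex_onto Phi Psi) => [|s si0]; last exact: PsiK.
  by apply: eq_bigl => s'; rewrite PhiK eqxx andbT Phi_i.
rewrite R1 R2 ddiffE (bigID (fun s : choice_ix al => nat_of_ord (s i) == 0%N)) /=.
rewrite /G; under [in RHS]eq_bigr do rewrite scalerDr !scalerA.
rewrite big_split /=; congr (_ + _); last first.
  apply: eq_bigr => s si0; rewrite (bigD1 i) //=; congr (_ *: _).
  rewrite /wt big_ltn_cond // eq_sym si0 -/X -/(A s).
  rewrite -/(C (s i)).
  by rewrite [RHS]mulrC mulrA.
pose z (s : choice_ix al) : choice_ix al :=
  finfun (fun l => if l == i then (ord0 : 'I_(al l).+1) else s l).
rewrite [RHS](partition_big z (fun r : choice_ix al => nat_of_ord (r i) == 0%N)) /=;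
  last by move=> s _; rewrite ffunE eqxx.
apply: eq_bigr => r /eqP r0.
rewrite (bigD1 i) //= -/(A r).
rewrite (eq_bigr (fun s : choice_ix al => (C (s i) / (X 0%N - X (s i)) * A r) *:
   f (fun l => xn x l (r l)))); last first.
  move=> s /andP[si0 /eqP zs].
  have As : A s = A r.
    by rewrite /A -zs; apply: eq_bigr => l nli; rewrite ffunE (negbTE nli).
  have Ps : P0 s = (fun l => xn x l (r l)).
    apply: functional_extensionality_dep => l; rewrite /P0 -zs ffunE.
    by case: eqP.
  by rewrite As Ps mulrAC.
rewrite -scaler_suml -mulr_suml; congr (_ *: _); congr (_ * _).
rewrite r0.
pose hj (j : 'I_(al i).+1) : choice_ix al :=
  finfun (fun l => if l == i then @inord (al l) j else r l).
have hji : forall j, hj j i = j by move=> j; rewrite ffunE eqxx inord_val.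
have zh : forall j, z (hj j) = r.
  move=> j; apply/ffunP => l; rewrite !ffunE.
  case: (eqVneq l i) => [->|nli] //.
  by apply: ord_inj; rewrite r0.
rewrite (reindex_onto hj (fun s : choice_ix al => s i)) /=; last first.
  move=> s /andP[si0 /eqP zs]; apply/ffunP => l; rewrite ffunE.
  case: (eqVneq l i) => [->|nli]; first by rewrite inord_val.
  by rewrite -zs ffunE (negbTE nli).
rewrite (eq_bigl (fun j : 'I_(al i).+1 => nat_of_ord j != 0%N)); last first.
  by move=> j; rewrite hji zh !eqxx !andbT.
under eq_bigr do rewrite hji.
rewrite -(big_mkord (fun j => j != 0%N) (fun j => C j / (X 0%N - X j))).
rewrite drop0 /wt drop0.
apply: partfrac_iota => //.
Qed.

Lemma off_bound (t : E) (j : 'I_(bt t).+1) : (off t + j <= al (tag t))%N.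
Proof.
case: (E_cases t) => Ht.
  move: j; rewrite Ht => j /=; rewrite off_e1 add1n.
  by move: (le_bt_e1 j).
move: j; move: (tag t) Ht => l Ht; rewrite Ht => j /=; rewrite off_e0 add0n.
have := leq_bt j; rewrite [in X in (_ <= X)%N -> _]bt_e0.
by case: eqP => // _ /leq_trans; apply; exact: leq0n.
Qed.

Lemma dom_ext_nat (U : set ('I_d -> K)) (x : blk al -> K) :
  dom_ext U al x -> forall v : 'I_d -> nat, (forall l, (v l <= al l)%N) ->
  U (fun l => xn x l (v l)).
Proof.
move=> Hx v hv.
suff -> : (fun l => xn x l (v l)) = pick_pt x (finfun (fun l => @inord (al l) (v l)) : choice_ix al).
  exact: Hx.
by apply: functional_extensionality_dep => l; rewrite /pick_pt ffunE.
Qed.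

Lemma D1 (U : set ('I_d -> K)) (x : blk al -> K) :
  dom_ext U al x -> dom_ext (dom_ext U (unit_mi i)) bt (phi x).
Proof.
move=> Hx s' u.
change (U (fun l => xn x l (off (Tagged TE (u l)) + s' (Tagged TE (u l))))).
by apply: (dom_ext_nat Hx) => l; apply: (off_bound (t := Tagged TE (u l))).
Qed.

Lemma Hd_of (U : set ('I_d -> K)) (x : blk al -> K) :
  dom_dq U al x -> forall a b, (a <= al i)%N -> (b <= al i)%N -> a != b ->
  xn x i a != xn x i b.
Proof.
case=> _ Hdist a b ha hb ab; apply/eqP; apply: Hdist.
by apply/eqP => /(congr1 (@nat_of_ord _)); rewrite !inordK //; apply/eqP.
Qed.

Lemma D2 (U : set ('I_d -> K)) (x : blk al -> K) :
  dom_dq U al x -> dom_dq (dom_ext U (unit_mi i)) bt (phi x).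
Proof.
case=> Hx Hdist; split; first exact: D1.
move=> t j k jk.
change (x (Tagged TA (@inord (al (tag t)) (off t + j))) <>
        x (Tagged TA (@inord (al (tag t)) (off t + k)))).
apply: Hdist; apply/eqP => /(congr1 (@nat_of_ord _)).
rewrite !inordK ?ltnS ?off_bound // => /eqP; rewrite eqn_add2l => /eqP jk'.
by move: jk; rewrite (ord_inj jk') eqxx.
Qed.

Lemma D3 (U : set ('I_d -> K)) (x : blk al -> K) :
  dom_dq U al x -> forall s' : choice_ix bt, dom_dq U (unit_mi i) (pick_pt (phi x) s').
Proof.
move=> Dx s'; have [Hx _] := Dx; split.
  move=> u; change (U (fun l => xn x l (off (Tagged TE (u l)) + s' (Tagged TE (u l))))).
  by apply: (dom_ext_nat Hx) => l; apply: (off_bound (t := Tagged TE (u l))).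
move=> l j k jk.
change (xn x l (off (Tagged TE j) + s' (Tagged TE j)) <>
        xn x l (off (Tagged TE k) + s' (Tagged TE k))).
case: (eqVneq l i) => [eli|nli]; last first.
  have h0 : forall j' : 'I_(unit_mi i l).+1, nat_of_ord j' = 0%N.
    move=> j'; have : (nat_of_ord j' < 1)%N.
      by move: (ltn_ord j'); rewrite [in X in (_ < X)%N -> _]umi_l.
    by rewrite ltnS leqn0 => /eqP.
  by move: jk; rewrite (ord_inj (etrans (h0 j) (esym (h0 k)))) eqxx.
subst l.
have H0 : forall j' : 'I_(unit_mi i i).+1,
    ((off (Tagged TE j') + s' (Tagged TE j'))%N == 0%N) = (nat_of_ord j' == 0%N).
  move=> j'; case: (eqVneq (nat_of_ord j') 0%N) => [j0|j0].
    have -> : Tagged TE j' = e0 i by apply: TaggedE.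
    by rewrite off_e0 ord_bt_e0i.
  by rewrite /off /= eqxx j0.
have H2 : forall j' : 'I_(unit_mi i i).+1, (nat_of_ord j' < 2)%N.
  by move=> j'; move: (ltn_ord j'); rewrite [in X in (_ < X)%N -> _]umi_ii.
apply/eqP; apply: (Hd_of Dx).
- by apply: (off_bound (t := Tagged TE j)).
- by apply: (off_bound (t := Tagged TE k)).
apply/eqP => E1; move: (H0 j) (H0 k); rewrite E1 => -> Hjk.
move: jk (H2 j) (H2 k) Hjk; clear E1 H0.
by case: j => [[|[|?]] ?] //; case: k => [[|[|?]] ?].
Qed.

Lemma ext_comp (U : set ('I_d -> K)) (f : ('I_d -> K) -> F) (h : (E -> K) -> F)
   (H : K ^^ blk bt -> F) :
  is_sds_ext U f (unit_mi i) h -> is_sds_ext (dom_ext U (unit_mi i)) h bt H ->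
  is_sds_ext U f al (fun x => H (phi x)).
Proof.
move=> [hc he] [Hc He]; split.
  apply: (within_comp (p := (fun x : K ^^ blk al => (phi x : K ^^ blk bt)))) => //.
    exact: (@precomp_cont K (blk al) (blk bt) tau).
  by move=> x; apply: D1.
move=> x Dx; rewrite (He _ (D2 Dx)); apply/esym/main_id.
  exact: Hd_of Dx.
move=> s'.
have -> : (fun t => xn (phi x) t (s' t)) = pick_pt (phi x) s'.
  by apply: functional_extensionality_dep => t; rewrite /pick_pt xnE.
exact: he (D3 Dx s').
Qed.

Lemma mindex_bt : mindex_abs bt = (mindex_abs al).-1.
Proof.
rewrite /mindex_abs (@bigE _ 0%N addn) /= bt_e1 bt_e0 eqxx add0n.
rewrite [in RHS](bigD1 i) //=.
rewrite (eq_bigr (fun l => al l)); last by move=> l nli; rewrite bt_e0 (negbTE nli).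
by rewrite -!subn1 addnBAC.
Qed.

End Core.

Unset Implicit Arguments.
Set Strict Implicit.

Lemma CkSDS_le (K : topFieldType) (F : topVSType K) (I : finType) (U : set (I -> K))
  (f : (I -> K) -> F) (k j : nat) : (j <= k)%N -> CkSDS U k f -> CkSDS U j f.
Proof.
elim: k => [|k IH] jk Hk; first by move: jk; rewrite leqn0 => /eqP ->.
case: (ltngtP j k.+1) jk => // [jk _|-> _ //].
by apply: IH; [rewrite -ltnS | case: Hk].
Qed.

Lemma CkSDS_ext (K : topFieldType) (F : topVSType K) (I : finType) (U : set (I -> K))
  (f : (I -> K) -> F) (k : nat) : CkSDS U k f ->
  forall al : I -> nat, (0 < mindex_abs al)%N -> (mindex_abs al <= k)%N ->
  exists h, is_sds_ext U f al h.
Proof.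
elim: k => [|k IH] Hk al a0 ak; first by move: a0 ak; case: (mindex_abs al).
case: Hk => Hk Hk2.
case: (ltngtP (mindex_abs al) k.+1) ak => // [ak _|e _]; last exact: Hk2.
by apply: IH.
Qed.

Lemma mindex_unit (d : nat) (i : 'I_d) : mindex_abs (unit_mi i) = 1%N.
Proof.
rewrite /mindex_abs (bigD1 i) //= {1}/unit_mi eqxx big1 // => l nli.
by rewrite /unit_mi (negbTE nli).
Qed.

Lemma pick_pos (d : nat) (al : 'I_d -> nat) : (0 < mindex_abs al)%N -> exists i, (0 < al i)%N.
Proof.
move=> H; case: (pselect (exists i, (0 < al i)%N)) => // N; exfalso.
move: H; rewrite /mindex_abs big1 // => l _.
by apply/eqP; rewrite -leqn0 leqNgt; apply/negP => H; apply: N; exists l.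
Qed.

Lemma C0sigma_eq (K : topFieldType) (F : topVSType K) (R : realType) (a : K -> R) (sigma : R)
  (I : finType) (V : set (I -> K)) (g g' : (I -> K) -> F) :
  (forall x, V x -> g x = g' x) -> C0sigma a sigma V g' -> C0sigma a sigma V g.
Proof.
move=> e H x0 Vx0 q gq; have [p [gp [W [nW HW]]]] := H x0 Vx0 q gq.
exists p; split => //; exists W; split => // x y Vx Wx Vy Wy.
by rewrite !e //; apply: HW.
Qed.

Theorem lemma2p2 (K : topFieldType) (d : nat) (F : topVSType K)
    (U : set ('I_d -> K)) (f : ('I_d -> K) -> F) (k : nat) :
  (0 < d)%N -> sds_domain U ->
  (* (a) *)
  (CkSDS U 1 f ->
   (forall (i : 'I_d) (h : K ^^ blk (unit_mi i) -> F),
       is_sds_ext U f (unit_mi i) h -> CkSDS (dom_ext U (unit_mi i)) k h) ->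
   CkSDS U k.+1 f)
  /\
  (* (b) *)
  (forall (R : realType) (a : K -> R) (sigma : R),
     valued_field a -> 0 < sigma ->
     CksigmaSDS a sigma U 1 f ->
     (forall (i : 'I_d) (h : K ^^ blk (unit_mi i) -> F),
        is_sds_ext U f (unit_mi i) h ->
        CksigmaSDS a sigma (dom_ext U (unit_mi i)) k h) ->
     CksigmaSDS a sigma U k.+1 f).
Proof.
move=> d0 sU.
have partA : CkSDS U 1 f ->
   (forall (i : 'I_d) (h : K ^^ blk (unit_mi i) -> F),
       is_sds_ext U f (unit_mi i) h -> CkSDS (dom_ext U (unit_mi i)) k h) ->
   CkSDS U k.+1 f.
  move=> H1 Hh.
  suff : forall j, (j <= k.+1)%N -> CkSDS U j f by apply.
  elim => [|j IH] jk; first by case: H1.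
  split; first by apply: IH; apply: ltnW.
  move=> al aj.
  case: j IH jk aj => [|j] IH jk aj; first by case: H1 => _; apply.
  have [i ai] : exists i, (0 < al i)%N by apply: pick_pos; rewrite aj.
  have [h hext] : exists h, is_sds_ext U f (unit_mi i) h.
    by case: H1 => _; apply; rewrite mindex_unit.
  have Ck := Hh i h hext.
  have [H Hext] : exists H, is_sds_ext (dom_ext U (unit_mi i)) h (bt al (i:=i)) H.
    apply: (@CkSDS_ext K F _ (dom_ext U (unit_mi i)) h k Ck); by rewrite (mindex_bt ai) aj //=.
  by exists (fun x => H (phi (al:=al) (i:=i) x)); exact: (ext_comp ai hext Hext).
split => //.
move=> R a sigma _ _ [H1 H1s] Hh.
split.
  by apply: partA => // i h hext; case: (Hh i h hext).
move=> al ak g gext.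
case: (leqP (mindex_abs al) 1) => a1; first exact: H1s.
have [i ai] : exists i, (0 < al i)%N by apply: pick_pos; apply: ltnW.
have [h hext] : exists h, is_sds_ext U f (unit_mi i) h.
  by case: H1 => _; apply; rewrite mindex_unit.
have [Ck Cs] := Hh i h hext.
have [H Hext] : exists H, is_sds_ext (dom_ext U (unit_mi i)) h (bt al (i:=i)) H.
  apply: (@CkSDS_ext K F _ (dom_ext U (unit_mi i)) h k Ck); rewrite (mindex_bt ai).
    by rewrite -ltnS prednK // ltnW.
  by rewrite -ltnS prednK // ltnW.
have G0ext := ext_comp ai hext Hext.
apply: (@C0sigma_eq K F R a sigma _ (dom_ext U al) g (fun x => H (phi (al:=al) (i:=i) x))).
  by move=> x Dx; apply: (ext_unique sU gext G0ext).
apply: (C0sigma_comp (W := dom_ext (dom_ext U (unit_mi i)) (bt al (i:=i)))).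
  by move=> x; apply: D1.
apply: (Cs _ _ H Hext).
by rewrite (mindex_bt ai) -ltnS prednK // ltnW.
Qed.
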